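(* Let $\nabla$ be a torsion-free connection on a surface $\Sigma$ whose Ricci tensor $\rho$ is skew-symmetric and nonzero everywhere. For any $1$-form $\xi$ on $\Sigma$, setting $\tau=\mathcal{L}\xi$, we have a) $Q^*\xi=\mathcal{Z}\tau$, and b) $\nabla\xi=\tau+[\xi(w)-2\mathcal{D}(\mathcal{B}\tau)]\,\rho/4$.
   Context: All objects are $C^\infty$. Killing operator: $(\mathcal{L}\xi)(u,v)=\tfrac12[(\nabla_u\xi)(v)+(\nabla_v\xi)(u)]$. $\nabla\xi$ denotes the 2-tensor $(u,v)\mapsto(\nabla_u\xi)(v)$. Since $\rho$ trivializes $\Lambda^2T^*\Sigma$, there is a unique 1-form $\phi$ with $\nabla_v\rho=\phi(v)\rho$ for all $v$, and a unique vector field $w$ with $\phi=\rho(w,\cdot)$. $Q:T\Sigma\to T\Sigma$ is the bundle morphism $Q(v)=4v+\nabla_v w+\tfrac34\phi(v)w$, and $Q^*$ is its dual, $Q^*\xi=\xi\circ Q$. For a symmetric 2-tensor $\tau$, $d^\nabla\tau$ is the 3-tensor $(d^\nabla\tau)(u,v,x)=(\nabla_u\tau)(v,x)-(\nabla_v\tau)(u,x)$, and $\mathcal{B}\tau$ is the 1-form with $[(\mathcal{B}\tau)(v)]\rho=(d^\nabla\tau)(\cdot,\cdot,v)$. For a 1-form $\xi$, $\mathcal{D}\xi$ is the function with $2(\mathcal{D}\xi)\rho=\xi\wedge\phi-d\xi$, where $(\xi\wedge\phi)(u,v)=\xi(u)\phi(v)-\phi(u)\xi(v)$ and $d\xi(u,v)=u(\xi(v))-v(\xi(u))-\xi([u,v])$.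 Finally $\mathcal{Z}\tau=2\,d[\mathcal{D}(\mathcal{B}\tau)]+4\mathcal{B}\tau-\tau(w,\cdot)+\tfrac32[\mathcal{D}(\mathcal{B}\tau)]\phi$. *)

(* Defs.v *)
(* The surface is modelled by a coordinate chart: an open set U of R^2 with
   coordinates (x^0, x^1) = (fst p, snd p).  All tensor fields are given by
   their components in the coordinate frame d/dx^0, d/dx^1. *)
From Stdlib Require Import Reals List.
From Coquelicot Require Import Coquelicot.
Open Scope R_scope.

Inductive I2 : Set := i0 | i1.

Definition sum2 (F : I2 -> R) : R := F i0 + F i1.

Definition delta (a b : I2) : R :=
  match a, b with i0, i0 => 1 | i1, i1 => 1 | _, _ => 0 end.

Definition scalar := R * R -> R.

Definition pd (i : I2) (f : scalar) (p : R * R) : R :=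
  match i with
  | i0 => Derive (fun t => f (t, snd p)) (fst p)
  | i1 => Derive (fun t => f (fst p, t)) (snd p)
  end.

Definition ex_pd (i : I2) (f : scalar) (p : R * R) : Prop :=
  match i with
  | i0 => ex_derive (fun t => f (t, snd p)) (fst p)
  | i1 => ex_derive (fun t => f (fst p, t)) (snd p)
  end.

Definition pds (l : list I2) (f : scalar) : scalar :=
  fold_right (fun i g => pd i g) f l.

Definition smooth_on (U : R * R -> Prop) (f : scalar) : Prop :=
  forall (l : list I2) (p : R * R), U p ->
    continuous (pds l f) p /\ (forall i, ex_pd i (pds l f) p).

(* Component types.  Christoffel symbols: Gam i j k = dx^k (nabla_{d_i} d_j). *)
Definition conn := I2 -> I2 -> I2 -> scalar.
Definition oneform := I2 -> scalar.
Definition vecfield := I2 -> scalar.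
Definition twotensor := I2 -> I2 -> scalar.

Definition torsion_free (U : R * R -> Prop) (G : conn) : Prop :=
  forall i j k p, U p -> G i j k p = G j i k p.

(* Curvature R(u,v) = nabla_u nabla_v - nabla_v nabla_u - nabla_[u,v]:
   Rm G i j k l p = dx^l (R(d_i, d_j) d_k). *)
Definition Rm (G : conn) (i j k l : I2) : scalar := fun p =>
  pd i (G j k l) p - pd j (G i k l) p
  + sum2 (fun m => G j k m p * G i m l p - G i k m p * G j m l p).

(* Ricci tensor rho(v, x) = trace (u |-> R(u, v) x). *)
Definition Ric (G : conn) : twotensor := fun j k p =>
  sum2 (fun i => Rm G i j k i p).

(* Covariant derivatives; the first index is the direction. *)
Definition nabla1 (G : conn) (xi : oneform) : twotensor := fun i j p =>
  pd i (xi j) p - sum2 (fun k => G i j k p * xi k p).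

Definition nabla2 (G : conn) (t : twotensor) : I2 -> twotensor := fun i a b p =>
  pd i (t a b) p
  - sum2 (fun k => G i a k p * t k b p + G i b k p * t a k p).

Definition nablav (G : conn) (v : vecfield) : I2 -> vecfield := fun i k p =>
  pd i (v k) p + sum2 (fun j => G i j k p * v j p).

Definition Killing (G : conn) (xi : oneform) : twotensor := fun a b p =>
  / 2 * (nabla1 G xi a b p + nabla1 G xi b a p).

Section Derived.
Variable G : conn.
Let rho := Ric G.

(* phi: the unique 1-form with nabla_v rho = phi(v) rho
   (solved using the trivializing component rho(d_0,d_1)). *)
Definition phi : oneform := fun i p => nabla2 G rho i i0 i1 p / rho i0 i1 p.

(* w: the unique vector field with rho(w, .) = phi (Cramer's rule for
   w^0 rho_{0k} + w^1 rho_{1k} = phi_k). *)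
Definition wvec : vecfield := fun k p =>
  let det := rho i0 i0 p * rho i1 i1 p - rho i0 i1 p * rho i1 i0 p in
  match k with
  | i0 => (phi i0 p * rho i1 i1 p - phi i1 p * rho i1 i0 p) / det
  | i1 => (rho i0 i0 p * phi i1 p - rho i0 i1 p * phi i0 p) / det
  end.

(* Q*xi = xi o Q, Q(v) = 4 v + nabla_v w + 3/4 phi(v) w. *)
Definition Qstar (xi : oneform) : oneform := fun a p =>
  sum2 (fun k => xi k p *
     (4 * delta a k + nablav G wvec a k p + 3 / 4 * phi a p * wvec k p)).

Definition dnabla (t : twotensor) (u v x : I2) : scalar := fun p =>
  nabla2 G t u v x p - nabla2 G t v u x p.

(* B tau: [(B tau)(v)] rho = (d^nabla tau)(.,.,v) *)
Definition Bop (t : twotensor) : oneform := fun x p =>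
  dnabla t i0 i1 x p / rho i0 i1 p.

Definition dform (xi : oneform) : twotensor := fun u v p =>
  pd u (xi v) p - pd v (xi u) p.

Definition wedge (xi eta : oneform) : twotensor := fun u v p =>
  xi u p * eta v p - eta u p * xi v p.

(* D xi: 2 (D xi) rho = xi /\ phi - d xi *)
Definition Dop (xi : oneform) : scalar := fun p =>
  (wedge xi phi i0 i1 p - dform xi i0 i1 p) / (2 * rho i0 i1 p).

Definition Zop (t : twotensor) : oneform := fun a p =>
  2 * pd a (Dop (Bop t)) p + 4 * Bop t a p
  - sum2 (fun k => t k a p * wvec k p)
  + 3 / 2 * Dop (Bop t) p * phi a p.

End Derived.

(* Main.v *)
Require Import Defs.
From Stdlib Require Import Reals List Lra.
From Coquelicot Require Import Coquelicot.
Open Scope R_scope.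

Section Infra.
Variable U : R * R -> Prop.
Hypothesis HU : open U.

Lemma loc_slice0 p : U p -> locally (fst p) (fun t => U (t, snd p)).
Proof.
  intros Hp. destruct (HU p Hp) as [e He]. exists e. intros t Ht.
  apply He. split; [exact Ht| apply ball_center].
Qed.

Lemma loc_slice1 p : U p -> locally (snd p) (fun t => U (fst p, t)).
Proof.
  intros Hp. destruct (HU p Hp) as [e He]. exists e. intros t Ht.
  apply He. split; [apply ball_center | exact Ht].
Qed.

Lemma pd_ext i (f g : scalar) p : U p -> (forall q, U q -> f q = g q) -> pd i f p = pd i g p.
Proof.
  intros Hp H. destruct i; simpl; apply Derive_ext_loc.
  - destruct (loc_slice0 p Hp) as [e He]. exists e. intros t Ht. apply H, He, Ht.
  - destruct (loc_slice1 p Hp) as [e He]. exists e. intros t Ht. apply H, He, Ht.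
Qed.

Lemma ex_pd_ext i (f g : scalar) p : U p -> (forall q, U q -> f q = g q) -> ex_pd i f p -> ex_pd i g p.
Proof.
  intros Hp H. destruct i; simpl; apply ex_derive_ext_loc.
  - destruct (loc_slice0 p Hp) as [e He]. exists e. intros t Ht. apply H, He, Ht.
  - destruct (loc_slice1 p Hp) as [e He]. exists e. intros t Ht. apply H, He, Ht.
Qed.

Lemma cont_ext (f g : scalar) p : U p -> (forall q, U q -> f q = g q) -> continuous f p -> continuous g p.
Proof.
  intros Hp H. apply continuous_ext_loc.
  destruct (HU p Hp) as [e He]. exists e. intros y Hy. apply H, He, Hy.
Qed.

Fixpoint Ck (n : nat) (f : scalar) : Prop :=
  (forall q, U q -> continuous f q) /\
  match n with
  | O => True
  | S m => (forall i q, U q -> ex_pd i f q) /\ (forall i, Ck m (pd i f))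
  end.

Lemma Ck_ext n : forall f g, (forall q, U q -> f q = g q) -> Ck n f -> Ck n g.
Proof.
  induction n as [|n IH]; intros f g H [Hc Hr]; split.
  - intros q Hq. apply (cont_ext f); auto.
  - exact I.
  - intros q Hq. apply (cont_ext f); auto.
  - destruct Hr as [He Hd]. split.
    + intros i q Hq. apply (ex_pd_ext i f); auto.
    + intros i. apply (IH (pd i f)); auto. intros q Hq. apply pd_ext; auto.
Qed.

Lemma Ck_mono n : forall f, Ck (S n) f -> Ck n f.
Proof.
  induction n as [|n IH]; intros f [Hc [He Hd]]; split; auto.
Qed.

Lemma Ck_cont n (f:scalar) q : Ck n f -> U q -> continuous f q.
Proof. destruct n; intros [H _]; auto. Qed.

Ltac pdsplit := intros i q; destruct i; simpl.

Lemma Ck_plus n : forall f g, Ck n f -> Ck n g -> Ck n (fun q => f q + g q).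
Proof.
  induction n as [|n IH]; intros f g Hf Hg; split.
  - intros q Hq. apply (continuous_plus f g); eapply Ck_cont; eauto.
  - exact I.
  - intros q Hq. apply (continuous_plus f g); eapply Ck_cont; eauto.
  - destruct Hf as [_ [Hfe Hfd]], Hg as [_ [Hge Hgd]]. split.
    + intros i q Hq. specialize (Hfe i q Hq). specialize (Hge i q Hq).
      destruct i; simpl in *; apply (ex_derive_plus _ _ _ Hfe Hge).
    + intros i. apply (Ck_ext n (fun q => pd i f q + pd i g q)).
      * intros q Hq. specialize (Hfe i q Hq). specialize (Hge i q Hq).
        destruct i; simpl in *; symmetry; apply (Derive_plus _ _ _ Hfe Hge).
      * apply IH; auto.
Qed.

Lemma Ck_opp n : forall f, Ck n f -> Ck n (fun q => - f q).
Proof.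
  induction n as [|n IH]; intros f Hf; split.
  - intros q Hq. apply (continuous_opp f); eapply Ck_cont; eauto.
  - exact I.
  - intros q Hq. apply (continuous_opp f); eapply Ck_cont; eauto.
  - destruct Hf as [_ [Hfe Hfd]]. split.
    + intros i q Hq. specialize (Hfe i q Hq).
      destruct i; simpl in *; apply (ex_derive_opp _ _ Hfe).
    + intros i. apply (Ck_ext n (fun q => - pd i f q)).
      * intros q Hq. destruct i; simpl in *; symmetry; apply Derive_opp.
      * apply IH; auto.
Qed.

Lemma Ck_const n : forall c, Ck n (fun _ => c).
Proof.
  induction n as [|n IH]; intros c; split.
  - intros q Hq. apply continuous_const.
  - exact I.
  - intros q Hq. apply continuous_const.
  - split.
    + intros i q Hq. destruct i; simpl; apply ex_derive_const.
    + intros i. apply (Ck_ext n (fun _ => 0)); auto.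
      intros q Hq. destruct i; simpl; symmetry; apply Derive_const.
Qed.

Lemma Ck_mult n : forall f g, Ck n f -> Ck n g -> Ck n (fun q => f q * g q).
Proof.
  induction n as [|n IH]; intros f g Hf Hg; split.
  - intros q Hq. apply (continuous_mult f g); eapply Ck_cont; eauto.
  - exact I.
  - intros q Hq. apply (continuous_mult f g); eapply Ck_cont; eauto.
  - pose proof (Ck_mono _ _ Hf) as Hf'. pose proof (Ck_mono _ _ Hg) as Hg'.
    destruct Hf as [_ [Hfe Hfd]], Hg as [_ [Hge Hgd]]. split.
    + intros i q Hq. specialize (Hfe i q Hq). specialize (Hge i q Hq).
      destruct i; simpl in *; apply (ex_derive_mult _ _ _ Hfe Hge).
    + intros i. apply (Ck_ext n (fun q => pd i f q * g q + f q * pd i g q)).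
      * intros q Hq. specialize (Hfe i q Hq). specialize (Hge i q Hq).
        destruct q as [x y]; destruct i; simpl in *; symmetry; apply (Derive_mult _ _ _ Hfe Hge).
      * apply Ck_plus; apply IH; auto.
Qed.

Lemma Ck_inv n : forall f, Ck n f -> (forall q, U q -> f q <> 0) -> Ck n (fun q => / f q).
Proof.
  induction n as [|n IH]; intros f Hf Hnz; split.
  - intros q Hq. apply (continuous_comp f Rinv). eapply Ck_cont; eauto.
    apply continuous_Rinv; auto.
  - exact I.
  - intros q Hq. apply (continuous_comp f Rinv). eapply Ck_cont; eauto.
    apply continuous_Rinv; auto.
  - pose proof (Ck_mono _ _ Hf) as Hf'.
    destruct Hf as [_ [Hfe Hfd]]. split.
    + intros i q Hq. specialize (Hfe i q Hq). specialize (Hnz q Hq).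
      destruct q as [x y]; destruct i; simpl in *; apply (ex_derive_inv _ _ Hfe Hnz).
    + intros i. apply (Ck_ext n (fun q => - (pd i f q * (/ f q * / f q)))).
      * intros q Hq. specialize (Hfe i q Hq). specialize (Hnz q Hq).
        destruct q as [x y]; destruct i; simpl in *; rewrite (Derive_inv _ _ Hfe Hnz); field; auto.
      * apply Ck_opp, Ck_mult; auto. apply Ck_mult; apply IH; auto.
Qed.

Definition CI f := forall n, Ck n f.

Lemma smooth_CI f : smooth_on U f -> CI f.
Proof.
  intros Hs n. cut (forall l, Ck n (pds l f)). { intros H. exact (H nil). }
  induction n as [|n IH]; intros l; split.
  - intros q Hq. apply (Hs l q Hq).
  - exact I.
  - intros q Hq. apply (Hs l q Hq).
  - split.
    + intros i q Hq. apply (Hs l q Hq).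
    + intros i. exact (IH (i :: l)).
Qed.

Lemma CI_plus (f : scalar) g : CI f -> CI g -> CI (fun q => f q + g q).
Proof. intros A B n; apply Ck_plus; auto. Qed.
Lemma CI_mult (f : scalar) g : CI f -> CI g -> CI (fun q => f q * g q).
Proof. intros A B n; apply Ck_mult; auto. Qed.
Lemma CI_opp (f : scalar) : CI f -> CI (fun q => - f q).
Proof. intros A n; apply Ck_opp; auto. Qed.
Lemma CI_minus (f : scalar) g : CI f -> CI g -> CI (fun q => f q - g q).
Proof. intros A B. apply CI_plus; auto. apply CI_opp; auto. Qed.
Lemma CI_const c : CI (fun _ => c).
Proof. intros n; apply Ck_const. Qed.
Lemma CI_inv (f : scalar) : CI f -> (forall q, U q -> f q <> 0) -> CI (fun q => / f q).
Proof. intros A B n; apply Ck_inv; auto. Qed.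
Lemma CI_div (f : scalar) g : CI f -> CI g -> (forall q, U q -> g q <> 0) -> CI (fun q => f q / g q).
Proof. intros A B C. apply CI_mult; auto. apply CI_inv; auto. Qed.
Lemma CI_pd i (f : scalar) : CI f -> CI (pd i f).
Proof. intros A n. destruct (A (S n)) as [_ [_ H]]. apply H. Qed.
Lemma CI_ex i (f : scalar) q : CI f -> U q -> ex_pd i f q.
Proof. intros A Hq. destruct (A 1%nat) as [_ [H _]]. apply H; auto. Qed.
Lemma CI_ext (f : scalar) g : (forall q, U q -> f q = g q) -> CI f -> CI g.
Proof. intros H A n. apply (Ck_ext n f); auto. Qed.

Lemma CI_schwarz (f : scalar) p : CI f -> U p -> pd i0 (pd i1 f) p = pd i1 (pd i0 f) p.
Proof.
  intros Hf Hp. destruct p as [x y]. simpl.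
  apply (Schwarz (fun u v => f (u, v)) x y).
  - destruct (HU _ Hp) as [e He]. exists e. intros u v Hu Hv.
    assert (Huv : U (u, v)) by (apply He; split; assumption).
    repeat split.
    + exact (CI_ex i0 f _ Hf Huv).
    + exact (CI_ex i1 f _ Hf Huv).
    + exact (CI_ex i0 (pd i1 f) _ (CI_pd i1 f Hf) Huv).
    + exact (CI_ex i1 (pd i0 f) _ (CI_pd i0 f Hf) Huv).
  - apply continuity_2d_pt_filterlim.
    pose proof (Ck_cont 0 (pd i0 (pd i1 f)) (x, y) (CI_pd _ _ (CI_pd _ _ Hf) 0%nat) Hp) as C.
    eapply filterlim_ext; [|exact C]. intros [u v]. reflexivity.
  - apply continuity_2d_pt_filterlim.
    pose proof (Ck_cont 0 (pd i1 (pd i0 f)) (x, y) (CI_pd _ _ (CI_pd _ _ Hf) 0%nat) Hp) as C.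
    eapply filterlim_ext; [|exact C]. intros [u v]. reflexivity.
Qed.

Lemma pd_plus i f g p : ex_pd i f p -> ex_pd i g p -> pd i (fun q => f q + g q) p = pd i f p + pd i g p.
Proof. destruct i; simpl; intros; apply Derive_plus; auto. Qed.
Lemma pd_minus i f g p : ex_pd i f p -> ex_pd i g p -> pd i (fun q => f q - g q) p = pd i f p - pd i g p.
Proof. destruct i; simpl; intros; apply Derive_minus; auto. Qed.
Lemma pd_mult i f g p : ex_pd i f p -> ex_pd i g p -> pd i (fun q => f q * g q) p = pd i f p * g p + f p * pd i g p.
Proof. destruct p; destruct i; simpl; intros; apply Derive_mult; auto. Qed.
Lemma pd_div i f g p : ex_pd i f p -> ex_pd i g p -> g p <> 0 -> pd i (fun q => f q / g q) p = (pd i f p * g p - f p * pd i g p) / (g p) ^ 2.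
Proof. destruct p; destruct i; simpl; intros; apply Derive_div; auto. Qed.
Lemma pd_const i c p : pd i (fun _ => c) p = 0.
Proof. destruct i; simpl; apply Derive_const. Qed.
Lemma pd_scal i c f p : ex_pd i f p -> pd i (fun q => c * f q) p = c * pd i f p.
Proof. intros H. rewrite (pd_mult i (fun _ => c) f p). rewrite pd_const. ring.
  destruct i; simpl; apply ex_derive_const. auto. Qed.

End Infra.

Lemma pd_opp i (f : scalar) p : pd i (fun q => - f q) p = - pd i f p.
Proof. destruct i; simpl; apply Derive_opp. Qed.

Section Geo.
Variable U : R * R -> Prop.
Variable G : conn.
Variable xi : oneform.
Hypothesis HU : open U.
Hypothesis HG : forall i j k, CI U (G i j k).
Hypothesis Htf : torsion_free U G.
Hypothesis Hsk : forall j k p, U p -> Ric G j k p = - Ric G k j p.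
Hypothesis Hnz : forall p, U p -> Ric G i0 i1 p <> 0.
Hypothesis Hxi : forall k, CI U (xi k).

Ltac ci0 := repeat first [ apply HG | apply Hxi
   | apply CI_pd | apply (CI_const U HU)
   | apply (CI_minus U HU) | apply (CI_plus U HU) | apply (CI_mult U HU) | apply (CI_opp U HU) ].

Lemma r_aa a q : U q -> Ric G a a q = 0.
Proof. intros Hq. pose proof (Hsk a a q Hq). lra. Qed.
Lemma r10 q : U q -> Ric G i1 i0 q = - Ric G i0 i1 q.
Proof. intros Hq. apply Hsk; auto. Qed.

Lemma CI_Ric j k : CI U (Ric G j k).
Proof. unfold Ric, Rm, sum2. ci0. Qed.

Lemma pdRic_aa i a q : U q -> pd i (Ric G a a) q = 0.
Proof. intros Hq. rewrite (pd_ext U HU i _ (fun _ => 0)); auto using r_aa. apply pd_const. Qed.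
Lemma pdRic10 i q : U q -> pd i (Ric G i1 i0) q = - pd i (Ric G i0 i1) q.
Proof. intros Hq. rewrite (pd_ext U HU i _ (fun q => - Ric G i0 i1 q)); auto using r10. apply pd_opp. Qed.

Lemma phi_val i q : U q -> phi G i q =
  pd i (Ric G i0 i1) q / Ric G i0 i1 q - (G i i0 i0 q + G i i1 i1 q).
Proof.
  intros Hq. unfold phi, nabla2, sum2. cbv beta zeta.
  rewrite ?(r_aa i0 q Hq), ?(r_aa i1 q Hq), ?(r10 q Hq). field. auto.
Qed.

Lemma CI_phi i : CI U (phi G i).
Proof.
  apply (CI_ext U HU (fun q => pd i (Ric G i0 i1) q / Ric G i0 i1 q - (G i i0 i0 q + G i i1 i1 q))).
  { intros q Hq. symmetry. apply phi_val; auto. }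
  apply (CI_minus U HU). apply (CI_div U HU); auto. apply CI_pd, CI_Ric. apply CI_Ric.
  ci0.
Qed.

Lemma nabla_rho i a b q : U q -> nabla2 G (Ric G) i a b q = phi G i q * Ric G a b q.
Proof.
  intros Hq. pose proof (Hnz q Hq).
  rewrite (phi_val i q Hq).
  destruct a, b; unfold nabla2, sum2;
  rewrite ?(pdRic_aa _ _ q Hq), ?(pdRic10 _ q Hq), ?(r_aa i0 q Hq), ?(r_aa i1 q Hq), ?(r10 q Hq);
  field; auto.
Qed.

Lemma pd_Ric i a b q : U q -> pd i (Ric G a b) q =
  phi G i q * Ric G a b q + sum2 (fun k => G i a k q * Ric G k b q + G i b k q * Ric G a k q).
Proof. intros Hq. rewrite <- nabla_rho; auto. unfold nabla2. ring. Qed.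

Lemma w_val0 q : U q -> wvec G i0 q = phi G i1 q / Ric G i0 i1 q.
Proof.
  intros Hq. pose proof (Hnz q Hq). unfold wvec. cbv beta zeta iota.
  rewrite (r_aa i0 q Hq), (r_aa i1 q Hq), (r10 q Hq). field. auto.
Qed.
Lemma w_val1 q : U q -> wvec G i1 q = - phi G i0 q / Ric G i0 i1 q.
Proof.
  intros Hq. pose proof (Hnz q Hq). unfold wvec. cbv beta zeta iota.
  rewrite (r_aa i0 q Hq), (r_aa i1 q Hq), (r10 q Hq). field. auto.
Qed.

Lemma CI_w k : CI U (wvec G k).
Proof.
  destruct k.
  - apply (CI_ext U HU (fun q => phi G i1 q / Ric G i0 i1 q)).
    { intros q Hq. symmetry. apply w_val0; auto. }
    apply (CI_div U HU); auto using CI_phi, CI_Ric.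
  - apply (CI_ext U HU (fun q => - phi G i0 q / Ric G i0 i1 q)).
    { intros q Hq. symmetry. apply w_val1; auto. }
    apply (CI_div U HU); auto using CI_phi, CI_Ric. apply (CI_opp U HU), CI_phi.
Qed.

Lemma dphi q : U q -> pd i0 (phi G i1) q - pd i1 (phi G i0) q = 2 * Ric G i0 i1 q.
Proof.
  intros Hq. pose proof (Hnz q Hq).
  assert (K : Ric G i0 i1 q - Ric G i1 i0 q =
     -(pd i0 (G i1 i0 i0) q + pd i0 (G i1 i1 i1) q) + (pd i1 (G i0 i0 i0) q + pd i1 (G i0 i1 i1) q)).
  { unfold Ric, Rm, sum2. ring. }
  rewrite (pd_ext U HU i0 (phi G i1) (fun q => pd i1 (Ric G i0 i1) q / Ric G i0 i1 q - (G i1 i0 i0 q + G i1 i1 i1 q))); [|auto|intros; apply phi_val; auto].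
  rewrite (pd_ext U HU i1 (phi G i0) (fun q => pd i0 (Ric G i0 i1) q / Ric G i0 i1 q - (G i0 i0 i0 q + G i0 i1 i1 q))); [|auto|intros; apply phi_val; auto].
  pose proof (CI_Ric i0 i1) as CR.
  assert (E : forall i f, CI U f -> ex_pd i f q) by (intros; apply (CI_ex U); auto).
  rewrite pd_minus, pd_div, pd_plus, (pd_minus i1), (pd_div i1), (pd_plus i1);
    try apply E; try ci0; try apply (CI_div U HU); auto; try apply CI_pd; auto.
  rewrite (CI_schwarz U HU _ q CR Hq).
  replace (2 * Ric G i0 i1 q) with (Ric G i0 i1 q - Ric G i1 i0 q) by (rewrite (r10 q Hq); ring).
  rewrite K. field. auto. all: apply (CI_inv U HU); auto using CI_Ric.
Qed.


Definition ff : scalar := fun q => dform xi i0 i1 q / (2 * Ric G i0 i1 q).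

Ltac ci := repeat first [ apply CI_Ric | apply CI_phi | apply CI_w | apply HG | apply Hxi
   | apply CI_pd | apply (CI_const U HU)
   | apply (CI_minus U HU) | apply (CI_plus U HU) | apply (CI_mult U HU) | apply (CI_opp U HU) ].

Lemma CI_ff : CI U ff.
Proof.
  unfold ff, dform. apply (CI_div U HU). ci. ci.
  intros q Hq. pose proof (Hnz q Hq). lra.
Qed.

Lemma ff_val q : U q -> pd i0 (xi i1) q = pd i1 (xi i0) q + 2 * ff q * Ric G i0 i1 q.
Proof. intros Hq. pose proof (Hnz q Hq). unfold ff, dform. field. auto. Qed.

Lemma S1 a b q : U q -> Killing G xi a b q = nabla1 G xi a b q - ff q * Ric G a b q.
Proof.
  intros Hq. pose proof (Hnz q Hq).
  destruct a, b; unfold Killing, nabla1, ff, dform, sum2;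
  rewrite ?(r_aa i0 q Hq), ?(r_aa i1 q Hq), ?(r10 q Hq), ?(Htf i1 i0 i0 q Hq), ?(Htf i1 i0 i1 q Hq);
  field; auto.
Qed.

Lemma CI_nabla1 a b : CI U (nabla1 G xi a b).
Proof. unfold nabla1, sum2. ci. Qed.

Ltac ci2 := repeat first [ apply CI_ff | apply CI_nabla1 | apply CI_Ric | apply CI_phi | apply CI_w | apply HG | apply Hxi
   | apply CI_pd | apply (CI_const U HU)
   | apply (CI_minus U HU) | apply (CI_plus U HU) | apply (CI_mult U HU) | apply (CI_opp U HU) ].
Ltac exs q Hq := apply (CI_ex U _ _ q); [ci2 | exact Hq].

Lemma L_nabla_tau i a b q : U q ->
  nabla2 G (Killing G xi) i a b q =
  nabla2 G (nabla1 G xi) i a b q - (pd i ff q + ff q * phi G i q) * Ric G a b q.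
Proof.
  intros Hq. unfold nabla2, sum2.
  rewrite (pd_ext U HU i (Killing G xi a b) (fun q => nabla1 G xi a b q - ff q * Ric G a b q)); [| auto | intros; apply S1; auto].
  rewrite pd_minus, pd_mult; try exs q Hq.
  rewrite !(S1 _ _ q Hq). rewrite pd_Ric; auto. unfold sum2. ring.
Qed.

Lemma L_ricci x q : U q ->
  nabla2 G (nabla1 G xi) i0 i1 x q - nabla2 G (nabla1 G xi) i1 i0 x q =
  -(Ric G i1 x q * xi i0 q - Ric G i0 x q * xi i1 q).
Proof.
  intros Hq. unfold nabla2, nabla1, sum2.
  rewrite !pd_minus, !pd_plus, !pd_mult; try exs q Hq.
  rewrite (CI_schwarz U HU (xi x) q (Hxi x) Hq).
  unfold Ric, Rm, sum2.
  rewrite ?(Htf i1 i0 i0 q Hq), ?(Htf i1 i0 i1 q Hq).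
  ring.
Qed.


Lemma S2 x q : U q -> Bop G (Killing G xi) x q = xi x q + pd x ff q + ff q * phi G x q.
Proof.
  intros Hq. pose proof (Hnz q Hq). unfold Bop, dnabla. cbv beta zeta.
  rewrite !L_nabla_tau; auto.
  pose proof (L_ricci x q Hq) as LR.
  replace (nabla2 G (nabla1 G xi) i0 i1 x q) with
    (nabla2 G (nabla1 G xi) i1 i0 x q - (Ric G i1 x q * xi i0 q - Ric G i0 x q * xi i1 q)) by lra.
  destruct x; rewrite ?(r_aa i0 q Hq), ?(r_aa i1 q Hq), ?(r10 q Hq); field; auto.
Qed.

Lemma D_id q : U q -> Dop G (Bop G (Killing G xi)) q =
  (xi i0 q * wvec G i0 q + xi i1 q * wvec G i1 q - 4 * ff q) / 2.
Proof.
  intros Hq. pose proof (Hnz q Hq). unfold Dop, wedge, dform. cbv beta zeta.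
  rewrite (pd_ext U HU i0 (Bop G (Killing G xi) i1) (fun q => xi i1 q + pd i1 ff q + ff q * phi G i1 q)); [|auto|intros; apply S2; auto].
  rewrite (pd_ext U HU i1 (Bop G (Killing G xi) i0) (fun q => xi i0 q + pd i0 ff q + ff q * phi G i0 q)); [|auto|intros; apply S2; auto].
  rewrite !(S2 _ q Hq).
  rewrite !pd_plus, !pd_mult; try exs q Hq.
  rewrite (CI_schwarz U HU ff q CI_ff Hq).
  pose proof (dphi q Hq) as DP.
  replace (pd i0 (phi G i1) q) with (pd i1 (phi G i0) q + 2 * Ric G i0 i1 q) by lra.
  rewrite (ff_val q Hq), (w_val0 q Hq), (w_val1 q Hq).
  field; auto.
Qed.


Lemma main_core p : U p ->
    (forall a, Qstar G xi a p = Zop G (Killing G xi) a p) /\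
    (forall a b, nabla1 G xi a b p =
        Killing G xi a b p
        + (sum2 (fun k => xi k p * wvec G k p) - 2 * Dop G (Bop G (Killing G xi)) p)
          * Ric G a b p / 4).
Proof.
  intros Hp. pose proof (Hnz p Hp). split.
  - intros a. unfold Qstar, Zop, nablav, sum2.
    rewrite (pd_ext U HU a (Dop G (Bop G (Killing G xi)))
      (fun q => (xi i0 q * wvec G i0 q + xi i1 q * wvec G i1 q - 4 * ff q) / 2)); [|auto| intros; apply D_id; auto].
    rewrite pd_div, pd_minus, !pd_plus, !pd_mult, !pd_const; try exs p Hp; try (cbv beta; lra).
    rewrite (D_id p Hp), (S2 a p Hp), !(S1 _ _ p Hp).
    unfold nabla1, sum2.
    rewrite (w_val0 p Hp), (w_val1 p Hp).
    destruct a; unfold delta; cbv beta iota;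
    rewrite ?(ff_val p Hp), ?(r_aa i0 p Hp), ?(r_aa i1 p Hp), ?(r10 p Hp), ?(Htf i1 i0 i0 p Hp), ?(Htf i1 i0 i1 p Hp);
    field; auto.
  - intros a b. rewrite (D_id p Hp), (S1 a b p Hp). unfold sum2. field.
Qed.

End Geo.

Theorem lemma12p1 (U : R * R -> Prop) (G : conn) (xi : oneform) :
  open U ->
  (forall i j k, smooth_on U (G i j k)) ->
  torsion_free U G ->
  (forall j k p, U p -> Ric G j k p = - Ric G k j p) ->
  (forall p, U p -> Ric G i0 i1 p <> 0) ->
  (forall k, smooth_on U (xi k)) ->
  let tau := Killing G xi in
  forall p, U p ->
    (forall a, Qstar G xi a p = Zop G tau a p) /\
    (forall a b, nabla1 G xi a b p =
        tau a b p
        + (sum2 (fun k => xi k p * wvec G k p) - 2 * Dop G (Bop G tau) p)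
          * Ric G a b p / 4).
Proof.
  intros HU HG Htf Hsk Hnz Hxi tau p Hp. unfold tau.
  apply (main_core U G xi HU); auto.
  - intros i j k. apply smooth_CI, HG.
  - intros k. apply smooth_CI, Hxi.
Qed.
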